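(* Let $X$ be a topological space, $\mathcal{C}$ the set of its closed sets, and $\mathcal{A}\subseteq\mathcal{C}$. The following are equivalent: (i) the crisp context $(X,\mathcal{A},\in)$ is a reduct of $(X,\mathcal{C},\in)$ in FCA; (ii) the crisp context $(X,\mathcal{A},\notin)$ is a reduct of $(X,\mathcal{C},\notin)$ in RST; (iii) $\mathcal{A}$ is a base for the closed sets of $X$, i.e. every $C\in\mathcal{C}$ equals $\bigcap\mathcal{A}'$ for some $\mathcal{A}'\subseteq\mathcal{A}$ (with $\bigcap\emptyset=X$).
   Context: Crisp contexts are $L$-contexts for $L=\{0,1\}$ with $*=\wedge$; a context is a triple $(X,Y,R)$ with $R\subseteq X\times Y$, and subsets are identified with $\{0,1\}$-valued maps. $(X,\mathcal{C},\in)$ has relation $\{(x,C)\mid x\in C\}$ and $\notin$ is its complement. For $U\subseteq X$, $V\subseteq Y$: $R^\uparrow U=\{y\mid\forall x\in U,(x,y)\in R\}$, $R^\downarrow V=\{x\mid\forall y\in V,(x,y)\in R\}$, $R^\exists U=\{y\mid\exists x\in U,(x,y)\in R\}$, $R^\forall V=\{x\mid\forall y,(x,y)\in R\Rightarrow y\in V\}$. $\mathcal{M}R=\{U\mid R^\downarrow R^\uparrow U=U\}$, $\mathcal{K}R=\{U\mid R^\forall R^\exists U=U\}$. For $X'\subseteq X$, $Y'\subseteq Y$, $R_{X',Y'}=R\cap(X'\times Y')$. $(X',Y',R_{X',Y'})$ is a reduct of $(X,Y,R)$ in FCA if the map $\mathcal{M}R_{X',Y'}\to\mathcal{M}R$,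 $U'\mapsto R^\downarrow R^\uparrow U'$, is an order isomorphism (for inclusion); it is a reduct in RST if the map $\mathcal{K}R_{X',Y'}\to\mathcal{K}R$, $U'\mapsto R^\forall R^\exists U'$, is an order isomorphism. *)

(* Defs.v *)
From mathcomp Require Import all_boot all_order.
From mathcomp Require Import boolp classical_sets topology.
Set Implicit Arguments. Unset Strict Implicit. Unset Printing Implicit Defensive.
Local Open Scope classical_set_scope.

(* A crisp context (X', Y', R restricted to X' x Y') is represented by its
   carrier sets X' : set X, Y' : set Y inside ambient types X, Y and a
   relation R : X -> Y -> Prop; subsets of X' are sets U : set X with U `<=` X'. *)
Definition cup (X Y : Type) (Xc : set X) (Yc : set Y) (R : X -> Y -> Prop)
  (U : set X) : set Y := [set y | Yc y /\ forall x, U x -> R x y].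
Definition cdown (X Y : Type) (Xc : set X) (Yc : set Y) (R : X -> Y -> Prop)
  (V : set Y) : set X := [set x | Xc x /\ forall y, V y -> R x y].
Definition cex (X Y : Type) (Xc : set X) (Yc : set Y) (R : X -> Y -> Prop)
  (U : set X) : set Y := [set y | Yc y /\ exists2 x, U x & R x y].
Definition call (X Y : Type) (Xc : set X) (Yc : set Y) (R : X -> Y -> Prop)
  (V : set Y) : set X := [set x | Xc x /\ forall y, Yc y -> R x y -> V y].

Definition cM (X Y : Type) (Xc : set X) (Yc : set Y) (R : X -> Y -> Prop)
  : set (set X) := [set U | U `<=` Xc /\ cdown Xc Yc R (cup Xc Yc R U) = U].
Definition cK (X Y : Type) (Xc : set X) (Yc : set Y) (R : X -> Y -> Prop)
  : set (set X) := [set U | U `<=` Xc /\ call Xc Yc R (cex Xc Yc R U) = U].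

Definition order_iso (X : Type) (A B : set (set X)) (f : set X -> set X) :=
  [/\ forall U, A U -> B (f U),
      forall U V, A U -> A V -> (U `<=` V <-> f U `<=` f V),
      forall U V, A U -> A V -> f U = f V -> U = V
    & forall W, B W -> exists2 U, A U & f U = W].

Definition reduct_FCA (X Y : Type) (X' : set X) (Y' : set Y)
    (Xc : set X) (Yc : set Y) (R : X -> Y -> Prop) :=
  order_iso (cM X' Y' R) (cM Xc Yc R)
            (fun U => cdown Xc Yc R (cup Xc Yc R U)).

Definition reduct_RST (X Y : Type) (X' : set X) (Y' : set Y)
    (Xc : set X) (Yc : set Y) (R : X -> Y -> Prop) :=
  order_iso (cK X' Y' R) (cK Xc Yc R)
            (fun U => call Xc Yc R (cex Xc Yc R U)).

Definition mem_rel (X : Type) : X -> set X -> Prop := fun x C => C x.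
Definition nmem_rel (X : Type) : X -> set X -> Prop := fun x C => ~ C x.

(* Main.v *)
Require Import Defs.
From mathcomp Require Import all_boot all_order.
From mathcomp Require Import boolp classical_sets topology.
Local Open Scope classical_set_scope.

Definition clY {X : Type} (Y : set (set X)) (U : set X) : set X :=
  \bigcap_(C in [set C | Y C /\ U `<=` C]) C.

Lemma cM_cl {X : Type} (Y : set (set X)) U :
  cdown setT Y (@mem_rel X) (cup setT Y (@mem_rel X) U) = clY Y U.
Proof.
apply/seteqP; split => x /=.
- by move=> [_ H] C [YC UC]; apply: H.
- by move=> H; split => // C [YC UC]; apply: H.
Qed.

Lemma cK_cl {X : Type} (Y : set (set X)) U :
  call setT Y (@nmem_rel X) (cex setT Y (@nmem_rel X) U) = clY Y U.
Proof.
apply/seteqP; split => x /=.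
- move=> [_ H] C [YC UC]; apply: contrapT => nC.
  have [_ [y Uy nyC]] := H C YC nC.
  by apply: nyC; apply: UC.
- move=> H; split => // C YC nC; split => //.
  apply: contrapT => nex; apply: nC; apply: H; split => // y Uy.
  by apply: contrapT => nyC; apply: nex; exists y.
Qed.

Lemma cK_cM {X : Type} (Y : set (set X)) :
  cK setT Y (@nmem_rel X) = cM setT Y (@mem_rel X).
Proof.
rewrite /cK /cM; apply/seteqP; split => U [H1 H2]; split => //; move: H2.
- by rewrite cK_cl cM_cl.
- by rewrite cK_cl cM_cl.
Qed.

Lemma cl_sub {X : Type} (Y : set (set X)) U : U `<=` clY Y U.
Proof. by move=> x Ux C [_ UC]; apply: UC. Qed.

Lemma cl_closed {X : topologicalType} (Y : set (set X)) U :
  Y `<=` [set C | closed C] -> closed (clY Y U).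
Proof. by move=> HY; apply: closed_bigI => C [YC _]; apply: HY. Qed.

Lemma cl_of_closed {X : topologicalType} (U : set X) :
  closed U -> clY [set C | closed C] U = U.
Proof.
move=> cU; apply/seteqP; split; last exact: cl_sub.
by move=> x H; apply: H; split.
Qed.

Lemma cMeq {X : Type} (Y : set (set X)) :
  cM setT Y (@mem_rel X) = [set U | clY Y U = U].
Proof.
rewrite /cM; apply/seteqP; split => U /=; rewrite cM_cl; first by case.
by move=> H; split.
Qed.

Theorem mainTheorem10 (X : topologicalType) (A : set (set X))
  (hA : A `<=` [set C | closed C]) :
  [<-> reduct_FCA setT A setT [set C | closed C] (@mem_rel X);
       reduct_RST setT A setT [set C | closed C] (@nmem_rel X);
       forall C : set X, closed C ->
         exists2 A' : set (set X), A' `<=` A & C = \bigcap_(B in A') B].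
Proof.
have eqR : reduct_RST setT A setT [set C | closed C] (@nmem_rel X) =
           reduct_FCA setT A setT [set C | closed C] (@mem_rel X).
  rewrite /reduct_RST /reduct_FCA !cK_cM.
  have -> : (fun U => call setT [set C | closed C] (@nmem_rel X)
              (cex setT [set C | closed C] (@nmem_rel X) U)) =
            (fun U => cdown setT [set C | closed C] (@mem_rel X)
              (cup setT [set C | closed C] (@mem_rel X) U)).
    by apply: funext => U; rewrite cK_cl cM_cl.
  by [].
rewrite eqR.
have closedY : [set C : set X | closed C] `<=` [set C | closed C] by [].
have i_iii : reduct_FCA setT A setT [set C | closed C] (@mem_rel X) ->
   forall C : set X, closed C ->
         exists2 A' : set (set X), A' `<=` A & C = \bigcap_(B in A') B.
  rewrite /reduct_FCA /order_iso => -[_ _ _ surj] C cC.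
  case: (surj C).
    by rewrite cMeq /= cl_of_closed.
  move=> U.
  rewrite cMeq /= cM_cl => HU.
  have cU : closed U by rewrite -HU; apply: cl_closed.
  rewrite cl_of_closed // => UC; subst U.
  exists [set B | A B /\ C `<=` B]; first by move=> B [].
  by rewrite -[LHS]HU.
have iii_i : (forall C : set X, closed C ->
         exists2 A' : set (set X), A' `<=` A & C = \bigcap_(B in A') B) ->
    reduct_FCA setT A setT [set C | closed C] (@mem_rel X).
  move=> H.
  have fid : forall U, cM setT A (@mem_rel X) U ->
      cdown setT [set C | closed C] (@mem_rel X)
        (cup setT [set C | closed C] (@mem_rel X) U) = U.
    move=> U; rewrite cMeq /= cM_cl => HU.
    have cU : closed U by rewrite -HU; apply: cl_closed.
    exact: cl_of_closed.
  split.
  - move=> U HU; rewrite fid //.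
    move: HU; rewrite !cMeq /= => HU.
    have cU : closed U by rewrite -HU; apply: cl_closed.
    exact: cl_of_closed.
  - by move=> U V HU HV; rewrite !fid.
  - by move=> U V HU HV; rewrite !fid.
  - move=> W; rewrite cMeq /= => HW.
    have cW : closed W by rewrite -HW; apply: cl_closed.
    exists W; last by rewrite cM_cl HW.
    rewrite cMeq /=; apply/seteqP; split; last exact: cl_sub.
    have [A' A'A ->] := H W cW.
    move=> x Hx B A'B; apply: (Hx B); split; first exact: A'A.
    by move=> y Hy; exact: Hy.
split; first by [].
split; first exact: i_iii.
exact: iii_i.
Qed.
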